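(* Let $r\ge1$ and consider the linear program $\mathrm{LP}_r$ over $\mathbb K$ described in the context. For every $\lambda\in\mathbb R$, let $\boldsymbol\mu=t^\lambda$. Then the valuation of the primal part $(\mathbf u,\mathbf v,\mathbf z,\mathbf z',\mathbf h)$ of the point with parameter $\boldsymbol\mu$ of the Hardy central path of $\mathrm{LP}_r$ equals $(u(\lambda),v(\lambda),z(\lambda),z'(\lambda),h(\lambda))$. These are given by: $u_0(\lambda)=1$, $v_0(\lambda)=\min(2,\lambda)$; $(u_i(\lambda),v_i(\lambda))=\big(1+\min(u_{i-1}(\lambda),v_{i-1}(\lambda)),\,1-2^{-i}+\max(u_{i-1}(\lambda),v_{i-1}(\lambda))\big)$ for $1\le i\le r$; $z_0(\lambda)=1$, $h_0(\lambda)=2$; and $z_i(\lambda)=1+u_{i-1}(\lambda)$, $z'_i(\lambda)=1+v_{i-1}(\lambda)$, $h_i(\lambda)=v_i(\lambda)$ for $1\le i\le r$.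
   Context: $\mathbb K$ is the real closed field of germs at $+\infty$ of real functions definable in $\bar{\mathbb R}^{\mathbb R}$, the ordered real field expanded by the power functions $t\mapsto t^r$. It contains the germs $t^\alpha$. $\mathrm{val}(\mathbf f)=\lim_{t\to\infty}\log|\mathbf f(t)|/\log t$, applied entrywise. $\mathrm{LP}_r$ has decision variables $\mathbf x=(\mathbf u_0,\mathbf v_0,\dots,\mathbf u_r,\mathbf v_r)$ and slack variables $\mathbf w=(\mathbf z_0,\mathbf h_0,\mathbf z_1,\mathbf z'_1,\mathbf h_1,\dots,\mathbf z_r,\mathbf z'_r,\mathbf h_r)$, all required to be $\ge0$. The problem is: minimize $\mathbf v_0$ subject to - $\mathbf u_0+\mathbf z_0=t$ and $\mathbf v_0+\mathbf h_0=t^2$; - for $1\le i\le r$: $\mathbf u_i+\mathbf z_i=t\mathbf u_{i-1}$, $\mathbf u_i+\mathbf z'_i=t\mathbf v_{i-1}$, and $\mathbf v_i+\mathbf h_i=t^{1-2^{-i}}(\mathbf u_{i-1}+\mathbf v_{i-1})$. This is of the form: minimize $\mathbf c^T\mathbf x$ subject to $\mathbf A\mathbf x+\mathbf w=\mathbf b$, $\mathbf x,\mathbf w\ge0$, with $\mathbf c=e_{\mathbf v_0}$. It is strictly feasible and has bounded feasible set. For each positive $\boldsymbol\mu\in\mathbb K$, its Hardy central path point is the unique solution $(\mathbf x,\mathbf w,\mathbf y,\mathbf s)$ over $\mathbb K$ of $\mathbf A\mathbf x+\mathbf w=\mathbf b$, $-\mathbf A^T\mathbf y+\mathbf s=\mathbf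 c$, $\mathbf w_i\mathbf y_i=\mathbf x_j\mathbf s_j=\boldsymbol\mu$ for all $i,j$, $\mathbf x,\mathbf w,\mathbf y,\mathbf s>0$. Its primal part is $(\mathbf x,\mathbf w)$. *)

(* Defs.v *)
From Stdlib Require Import Reals Lra Lia Arith.
Open Scope R_scope.

Definition coef (t : R) (i : nat) : R := Rpower t (1 - / 2 ^ i).

(* (x, w, y, s) is the central path point of LP_r (with t a fixed real number)
   for parameter mu.
   Primal variables: u i, v i (0 <= i <= r).
   Slacks: z i (0 <= i <= r, row z_i), zp i (1 <= i <= r, row z'_i),
           h i (0 <= i <= r, row h_i).
   Dual variables y: yz i, yzp i, yh i (one per row / slack).
   Dual slacks s:   su i, sv i (one per column u_i, v_i).
   Equations: A x + w = b, -A^T y + s = c (c = e_{v_0}),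
              w_i y_i = mu, x_j s_j = mu, x,w,y,s > 0. *)
Definition central_point (r : nat) (t mu : R)
  (u v z zp h yz yzp yh su sv : nat -> R) : Prop :=
  u 0%nat + z 0%nat = t /\
  v 0%nat + h 0%nat = t ^ 2 /\
  (forall i, (1 <= i <= r)%nat ->
     u i + z i = t * u (i - 1)%nat /\
     u i + zp i = t * v (i - 1)%nat /\
     v i + h i = coef t i * (u (i - 1)%nat + v (i - 1)%nat)) /\
  (forall j, (j <= r)%nat ->
     su j = (if Nat.eqb j 0 then yz 0%nat else yz j + yzp j)
            - (if Nat.ltb j r then t * yz (S j) + coef t (S j) * yh (S j) else 0) /\
     sv j = (if Nat.eqb j 0 then 1 else 0) + yh j
            - (if Nat.ltb j r then t * yzp (S j) + coef t (S j) * yh (S j) else 0)) /\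
  (forall i, (i <= r)%nat ->
     0 < u i /\ 0 < v i /\ 0 < su i /\ 0 < sv i /\
     u i * su i = mu /\ v i * sv i = mu /\
     0 < z i /\ 0 < yz i /\ z i * yz i = mu /\
     0 < h i /\ 0 < yh i /\ h i * yh i = mu) /\
  (forall i, (1 <= i <= r)%nat ->
     0 < zp i /\ 0 < yzp i /\ zp i * yzp i = mu).

Definition has_val (f : R -> R) (a : R) : Prop :=
  forall eps, 0 < eps -> exists T, forall t, T < t ->
    Rabs (ln (Rabs (f t)) / ln t - a) < eps.

Fixpoint uv_val (lam : R) (i : nat) : R * R :=
  match i with
  | O => (1, Rmin 2 lam)
  | S k => let p := uv_val lam k in
           (1 + Rmin (fst p) (snd p), 1 - / 2 ^ (S k) + Rmax (fst p) (snd p))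
  end.

Definition u_val (lam : R) (i : nat) : R := fst (uv_val lam i).
Definition v_val (lam : R) (i : nat) : R := snd (uv_val lam i).
Definition z_val (lam : R) (i : nat) : R :=
  match i with O => 1 | S k => 1 + u_val lam k end.
Definition zp_val (lam : R) (i : nat) : R := 1 + v_val lam (i - 1).
Definition h_val (lam : R) (i : nat) : R :=
  match i with O => 2 | S _ => v_val lam i end.

(* Main.v *)
Require Import Defs.
From Stdlib Require Import Reals Lra Lia Arith.
Open Scope R_scope.

Definition theta (f : R -> R) (e : R) : Prop :=
  exists C T, 1 <= C /\ forall t, T < t ->
    Rpower t e <= C * f t /\ f t <= C * Rpower t e.

Lemma Rpower_pos' t e : 0 < Rpower t e.
Proof. unfold Rpower; apply exp_pos. Qed.

Lemma pos_of C x y : 1 <= C -> 0 < y -> y <= C * x -> 0 < x.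
Proof. intros. apply (Rmult_lt_reg_l C); lra. Qed.

Lemma theta_has_val f e : theta f e -> has_val f e.
Proof.
  intros [C [T [HC H]]] eps Heps.
  exists (Rmax (Rmax T 1) (exp (ln C / eps))). intros t Ht.
  assert (HT : T < t) by (eapply Rle_lt_trans; [|exact Ht]; eapply Rle_trans; [apply Rmax_l|apply Rmax_l]).
  assert (H1 : 1 < t) by (eapply Rle_lt_trans; [|exact Ht]; eapply Rle_trans; [apply Rmax_r|apply Rmax_l]).
  assert (He : exp (ln C / eps) < t) by (eapply Rle_lt_trans; [|exact Ht]; apply Rmax_r).
  destruct (H t HT) as [Hl Hu].
  pose proof (Rpower_pos' t e) as Hp.
  assert (Hf : 0 < f t) by (eapply pos_of; eauto).
  rewrite (Rabs_right (f t)) by lra.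
  assert (Hlt : 0 < ln t) by (rewrite <- ln_1; apply ln_increasing; lra).
  assert (HlC : 0 <= ln C) by (destruct (Rle_lt_or_eq_dec 1 C HC) as [h|h]; [rewrite <- ln_1; left; apply ln_increasing; lra | subst; rewrite ln_1; lra]).
  assert (HlnC : ln C < eps * ln t).
  { assert (ln (exp (ln C / eps)) < ln t) by (apply ln_increasing; [apply exp_pos|lra]).
    rewrite ln_exp in H0.
    apply (Rmult_lt_compat_l eps) in H0; [|lra].
    replace (eps * (ln C / eps)) with (ln C) in H0 by (field; lra). lra. }
  assert (Hle : forall a b, 0 < a -> a <= b -> ln a <= ln b).
  { intros a b Ha Hab. destruct (Rle_lt_or_eq_dec a b Hab) as [h|h];
    [left; apply ln_increasing; lra | subst; lra]. }
  assert (Hup : ln (f t) <= ln C + e * ln t).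
  { rewrite <- ln_Rpower, <- ln_mult by lra. apply Hle; lra. }
  assert (Hlo : e * ln t <= ln C + ln (f t)).
  { rewrite <- ln_Rpower, <- ln_mult by lra. apply Hle; lra. }
  apply Rabs_def1.
  - apply (Rmult_lt_reg_r (ln t)); [lra|].
    replace ((ln (f t) / ln t - e) * ln t) with (ln (f t) - e * ln t) by (field; lra). lra.
  - apply (Rmult_lt_reg_r (ln t)); [lra|].
    replace ((ln (f t) / ln t - e) * ln t) with (ln (f t) - e * ln t) by (field; lra). lra.
Qed.

Lemma theta_pow e : theta (fun t => Rpower t e) e.
Proof. exists 1, 0. split; [lra|]. intros t _. lra. Qed.

Lemma theta_id : theta (fun t => t) 1.
Proof. exists 1, 0. split; [lra|]. intros t Ht. rewrite Rpower_1 by lra. lra. Qed.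

Lemma theta_pos f e : theta f e -> exists T, forall t, T < t -> 0 < f t.
Proof.
  intros [C [T [HC H]]]. exists T. intros t Ht. destruct (H t Ht).
  pose proof (Rpower_pos' t e). nra.
Qed.

Lemma theta_mul f g a b e : e = a + b -> theta f a -> theta g b -> theta (fun t => f t * g t) e.
Proof.
  intros -> [C1 [T1 [HC1 H1]]] [C2 [T2 [HC2 H2]]].
  exists (C1 * C2), (Rmax T1 T2). split; [nra|]. intros t Ht.
  destruct (H1 t) as [a1 a2]; [eapply Rle_lt_trans; [apply Rmax_l|exact Ht]|].
  destruct (H2 t) as [b1 b2]; [eapply Rle_lt_trans; [apply Rmax_r|exact Ht]|].
  rewrite Rpower_plus.
  pose proof (Rpower_pos' t a). pose proof (Rpower_pos' t b).
  split.
  - replace (C1 * C2 * (f t * g t)) with ((C1 * f t) * (C2 * g t)) by ring.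
    apply Rmult_le_compat; lra.
  - replace (C1 * C2 * (Rpower t a * Rpower t b)) with ((C1 * Rpower t a) * (C2 * Rpower t b)) by ring.
    assert (0 < f t) by (apply (pos_of C1 (f t) (Rpower t a)); lra). assert (0 < g t) by (apply (pos_of C2 (g t) (Rpower t b)); lra).
    apply Rmult_le_compat; lra.
Qed.

Lemma Rpower_min t a b : 1 <= t -> Rpower t (Rmin a b) = Rmin (Rpower t a) (Rpower t b).
Proof.
  intros Ht. unfold Rmin at 1. destruct (Rle_dec a b).
  - rewrite Rmin_left; auto. apply Rle_Rpower; auto.
  - rewrite Rmin_right; auto. apply Rle_Rpower; lra.
Qed.

Lemma Rpower_max t a b : 1 <= t -> Rpower t (Rmax a b) = Rmax (Rpower t a) (Rpower t b).
Proof.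
  intros Ht. unfold Rmax at 1. destruct (Rle_dec a b).
  - rewrite Rmax_right; auto. apply Rle_Rpower; auto.
  - rewrite Rmax_left; auto. apply Rle_Rpower; lra.
Qed.

Lemma theta_min f g a b e : e = Rmin a b -> theta f a -> theta g b ->
  theta (fun t => Rmin (f t) (g t)) e.
Proof.
  intros -> [C1 [T1 [HC1 H1]]] [C2 [T2 [HC2 H2]]].
  exists (C1 + C2), (Rmax 1 (Rmax T1 T2)). split; [lra|]. intros t Ht.
  assert (Ht1 : 1 < t) by (eapply Rle_lt_trans; [apply Rmax_l|exact Ht]).
  assert (Ht2 : Rmax T1 T2 < t) by (eapply Rle_lt_trans; [apply Rmax_r|exact Ht]).
  destruct (H1 t) as [a1 a2]; [eapply Rle_lt_trans; [apply Rmax_l|exact Ht2]|].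
  destruct (H2 t) as [b1 b2]; [eapply Rle_lt_trans; [apply Rmax_r|exact Ht2]|].
  pose proof (Rpower_pos' t a). pose proof (Rpower_pos' t b).
  assert (0 < f t) by (apply (pos_of C1 (f t) (Rpower t a)); lra). assert (0 < g t) by (apply (pos_of C2 (g t) (Rpower t b)); lra).
  assert (C2 * f t >= 0) by nra. assert (C1 * g t >= 0) by nra.
  assert (C2 * Rpower t a >= 0) by nra. assert (C1 * Rpower t b >= 0) by nra.
  rewrite Rpower_min by lra.
  unfold Rmin; destruct (Rle_dec (Rpower t a) (Rpower t b)); destruct (Rle_dec (f t) (g t)); split; nra.
Qed.

Lemma theta_plus f g a b e : e = Rmax a b -> theta f a -> theta g b ->
  theta (fun t => f t + g t) e.
Proof.
  intros -> [C1 [T1 [HC1 H1]]] [C2 [T2 [HC2 H2]]].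
  exists (C1 + C2), (Rmax 1 (Rmax T1 T2)). split; [lra|]. intros t Ht.
  assert (Ht1 : 1 < t) by (eapply Rle_lt_trans; [apply Rmax_l|exact Ht]).
  assert (Ht2 : Rmax T1 T2 < t) by (eapply Rle_lt_trans; [apply Rmax_r|exact Ht]).
  destruct (H1 t) as [a1 a2]; [eapply Rle_lt_trans; [apply Rmax_l|exact Ht2]|].
  destruct (H2 t) as [b1 b2]; [eapply Rle_lt_trans; [apply Rmax_r|exact Ht2]|].
  pose proof (Rpower_pos' t a). pose proof (Rpower_pos' t b).
  assert (0 < f t) by (apply (pos_of C1 (f t) (Rpower t a)); lra). assert (0 < g t) by (apply (pos_of C2 (g t) (Rpower t b)); lra).
  assert (C2 * f t >= 0) by nra. assert (C1 * g t >= 0) by nra.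
  assert (C2 * g t >= 0) by nra. assert (C1 * f t >= 0) by nra.
  rewrite Rpower_max by lra.
  unfold Rmax; destruct (Rle_dec (Rpower t a) (Rpower t b)); split; nra.
Qed.

Lemma theta_sandwich M f e : theta M e ->
  (exists K T, 1 <= K /\ forall t, T < t -> M t <= K * f t /\ f t <= K * M t) ->
  theta f e.
Proof.
  intros [C [T1 [HC H1]]] [K [T2 [HK H2]]].
  exists (C * K), (Rmax T1 T2). split; [nra|]. intros t Ht.
  destruct (H1 t) as [a1 a2]; [eapply Rle_lt_trans; [apply Rmax_l|exact Ht]|].
  destruct (H2 t) as [b1 b2]; [eapply Rle_lt_trans; [apply Rmax_r|exact Ht]|].
  pose proof (Rpower_pos' t e).
  split; nra.
Qed.


Definition feas (r : nat) (t : R) (u v z zp h : nat -> R) : Prop :=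
  u 0%nat + z 0%nat = t /\
  v 0%nat + h 0%nat = t ^ 2 /\
  (forall i, (1 <= i <= r)%nat ->
     u i + z i = t * u (i - 1)%nat /\
     u i + zp i = t * v (i - 1)%nat /\
     v i + h i = coef t i * (u (i - 1)%nat + v (i - 1)%nat)).

Definition dualeq (r : nat) (t : R) (yz yzp yh su sv : nat -> R) : Prop :=
  forall j, (j <= r)%nat ->
     su j = (if Nat.eqb j 0 then yz 0%nat else yz j + yzp j)
            - (if Nat.ltb j r then t * yz (S j) + coef t (S j) * yh (S j) else 0) /\
     sv j = (if Nat.eqb j 0 then 1 else 0) + yh j
            - (if Nat.ltb j r then t * yzp (S j) + coef t (S j) * yh (S j) else 0).

Definition term (yz yzp yh su sv u v z zp h : nat -> R) (j : nat) : R :=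
  su j * u j + sv j * v j + yz j * z j + yh j * h j +
  (if Nat.eqb j 0 then 0 else yzp j * zp j).

Definition Qf (r : nat) (t : R) (yz yzp yh u v : nat -> R) (j : nat) : R :=
  (if Nat.ltb j r then t * yz (S j) + coef t (S j) * yh (S j) else 0) * u j +
  (if Nat.ltb j r then t * yzp (S j) + coef t (S j) * yh (S j) else 0) * v j.

Lemma telesc r t yz yzp yh su sv u v z zp h :
  dualeq r t yz yzp yh su sv -> feas r t u v z zp h ->
  forall k, (k <= r)%nat ->
  sum_f_R0 (term yz yzp yh su sv u v z zp h) k =
    v 0%nat + yz 0%nat * t + yh 0%nat * t ^ 2 - Qf r t yz yzp yh u v k.
Proof.
  intros Hd [F0 [F1 F2]]. induction k as [|k IH]; intros Hk.
  - simpl sum_f_R0. destruct (Hd 0%nat ltac:(lia)) as [E1 E2].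
    unfold term, Qf. rewrite E1, E2. simpl Nat.eqb.
    replace (z 0%nat) with (t - u 0%nat) by lra.
    replace (h 0%nat) with (t^2 - v 0%nat) by lra. ring.
  - simpl sum_f_R0. rewrite IH by lia.
    destruct (Hd (S k) Hk) as [E1 E2].
    destruct (F2 (S k) ltac:(lia)) as [G1 [G2 G3]].
    replace (S k - 1)%nat with k in G1, G2, G3 by lia.
    unfold term, Qf. rewrite E1, E2. simpl Nat.eqb.
    replace (Nat.ltb k r) with true by (symmetry; apply Nat.ltb_lt; lia).
    replace (z (S k)) with (t * u k - u (S k)) by lra.
    replace (zp (S k)) with (t * v k - u (S k)) by lra.
    replace (h (S k)) with (coef t (S k) * (u k + v k) - v (S k)) by lra.
    ring.
Qed.


Lemma sum_nonneg f n : (forall j, (j <= n)%nat -> 0 <= f j) -> 0 <= sum_f_R0 f n.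
Proof.
  induction n as [|n IH]; intros Hf; simpl.
  - apply Hf; lia.
  - assert (0 <= sum_f_R0 f n) by (apply IH; intros; apply Hf; lia).
    specialize (Hf (S n) (le_n _)). lra.
Qed.

Lemma sum_ge_elem f n : (forall j, (j <= n)%nat -> 0 <= f j) ->
  forall j, (j <= n)%nat -> f j <= sum_f_R0 f n.
Proof.
  induction n as [|n IH]; intros Hf j Hj.
  - replace j with 0%nat by lia. simpl. lra.
  - simpl. destruct (Nat.eq_dec j (S n)) as [->|Hne].
    + assert (0 <= sum_f_R0 f n).
      { apply sum_nonneg. intros; apply Hf; lia. }
      lra.
    + assert (f j <= sum_f_R0 f n) by (apply IH; [intros; apply Hf|]; lia).
      specialize (Hf (S n) (le_n _)). lra.
Qed.

Lemma div_step s a b N : 0 < s -> s * a <= N * (b * s) -> a <= N * b.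
Proof. intros Hs H. apply (Rmult_le_reg_l s); [lra|]. nra. Qed.

Lemma key r t mu u v z zp h yz yzp yh su sv u' v' z' zp' h' :
  central_point r t mu u v z zp h yz yzp yh su sv ->
  feas r t u' v' z' zp' h' ->
  (forall j, (j <= r)%nat -> 0 <= u' j /\ 0 <= v' j /\ 0 <= z' j /\ 0 <= h' j) ->
  (forall j, (1 <= j <= r)%nat -> 0 <= zp' j) ->
  v' 0%nat <= v 0%nat ->
  forall j, (j <= r)%nat ->
    u' j <= 5 * INR (S r) * u j /\ v' j <= 5 * INR (S r) * v j /\
    z' j <= 5 * INR (S r) * z j /\ h' j <= 5 * INR (S r) * h j /\
    ((1 <= j)%nat -> zp' j <= 5 * INR (S r) * zp j).
Proof.
  intros [C0 [C1 [C2 [C3 [C4 C5]]]]] Hf Hn Hnp Hv j Hj.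
  assert (Hfx : feas r t u v z zp h) by (split; [|split]; auto).
  assert (Hd : dualeq r t yz yzp yh su sv) by exact C3.
  assert (Hmu : 0 < mu) by (destruct (C4 0%nat ltac:(lia)) as [a [b [c [d [e _]]]]]; nra).
  pose proof (telesc _ _ _ _ _ _ _ _ _ _ _ _ Hd Hfx r (le_n _)) as T1.
  pose proof (telesc _ _ _ _ _ _ _ _ _ _ _ _ Hd Hf r (le_n _)) as T2.
  assert (Q0 : forall uu vv, Qf r t yz yzp yh uu vv r = 0).
  { intros. unfold Qf. rewrite Nat.ltb_irrefl. ring. }
  rewrite Q0 in T1, T2.
  assert (Tb : sum_f_R0 (term yz yzp yh su sv u v z zp h) r <= sum_f_R0 (fun _ => 5 * mu) r).
  { apply sum_Rle. intros n Hn'. destruct (C4 n Hn') as [a [b [c [d [e [f [g [k [l [m [o p]]]]]]]]]]].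
    unfold term. destruct (Nat.eqb n 0) eqn:E.
    - lra.
    - assert (1 <= n <= r)%nat by (apply Nat.eqb_neq in E; lia).
      destruct (C5 n H) as [_ [_ q]]. lra. }
  rewrite sum_cte in Tb.
  assert (Tn : forall n, (n <= r)%nat -> 0 <= term yz yzp yh su sv u' v' z' zp' h' n).
  { intros n Hn'. destruct (C4 n Hn') as [a [b [c [d [e [f [g [k [l [m [o p]]]]]]]]]]].
    destruct (Hn n Hn') as [q1 [q2 [q3 q4]]].
    unfold term.
    assert (0 <= (if Nat.eqb n 0 then 0 else yzp n * zp' n)).
    { destruct (Nat.eqb n 0) eqn:E; [lra|].
      assert (1 <= n <= r)%nat by (apply Nat.eqb_neq in E; lia).
      destruct (C5 n H) as [_ [q _]]. specialize (Hnp n H). nra. }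
    nra. }
  pose proof (sum_ge_elem _ _ Tn j Hj) as Tj.
  assert (Tot : term yz yzp yh su sv u' v' z' zp' h' j <= 5 * INR (S r) * mu) by lra.
  destruct (C4 j Hj) as [a [b [c [d [e [f [g [k [l [m [o p]]]]]]]]]]].
  destruct (Hn j Hj) as [q1 [q2 [q3 q4]]].
  assert (Hz : 0 <= (if Nat.eqb j 0 then 0 else yzp j * zp' j)).
  { destruct (Nat.eqb j 0) eqn:E; [lra|].
    assert (1 <= j <= r)%nat by (apply Nat.eqb_neq in E; lia).
    destruct (C5 j H) as [_ [q _]]. specialize (Hnp j H). nra. }
  unfold term in Tot.
  assert (P1 : 0 <= su j * u' j) by nra.
  assert (P2 : 0 <= sv j * v' j) by nra.
  assert (P3 : 0 <= yz j * z' j) by nra.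
  assert (P4 : 0 <= yh j * h' j) by nra.
  split; [|split; [|split; [|split]]].
  - apply (div_step (su j)); [lra|]. rewrite e. lra.
  - apply (div_step (sv j)); [lra|]. rewrite f. lra.
  - apply (div_step (yz j)); [lra|]. rewrite l. lra.
  - apply (div_step (yh j)); [lra|]. rewrite p. lra.
  - intros Hj1. destruct (C5 j ltac:(lia)) as [w1 [w2 w3]].
    replace (Nat.eqb j 0) with false in Tot by (symmetry; apply Nat.eqb_neq; lia).
    apply (div_step (yzp j)); [lra|]. rewrite w3. lra.
Qed.

Lemma v0_le r t mu u v z zp h yz yzp yh su sv :
  central_point r t mu u v z zp h yz yzp yh su sv -> 0 < t ->
  v 0%nat <= 5 * INR (S r) * mu.
Proof.
  intros [C0 [C1 [C2 [C3 [C4 C5]]]]] Ht.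
  assert (Hfx : feas r t u v z zp h) by (split; [|split]; auto).
  assert (Hd : dualeq r t yz yzp yh su sv) by exact C3.
  assert (Hmu : 0 < mu) by (destruct (C4 0%nat ltac:(lia)) as [a [b [c [d [e _]]]]]; nra).
  pose proof (telesc _ _ _ _ _ _ _ _ _ _ _ _ Hd Hfx r (le_n _)) as T1.
  assert (Q0 : forall uu vv, Qf r t yz yzp yh uu vv r = 0).
  { intros. unfold Qf. rewrite Nat.ltb_irrefl. ring. }
  rewrite Q0 in T1.
  assert (Tb : sum_f_R0 (term yz yzp yh su sv u v z zp h) r <= sum_f_R0 (fun _ => 5 * mu) r).
  { apply sum_Rle. intros n Hn'. destruct (C4 n Hn') as [a [b [c [d [e [f [g [k [l [m [o p]]]]]]]]]]].
    unfold term. destruct (Nat.eqb n 0) eqn:E.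
    - lra.
    - assert (1 <= n <= r)%nat by (apply Nat.eqb_neq in E; lia).
      destruct (C5 n H) as [_ [_ q]]. lra. }
  rewrite sum_cte in Tb.
  destruct (C4 0%nat ltac:(lia)) as [a [b [c [d [e [f [g [k [l [m [o p]]]]]]]]]]].
  assert (0 < yz 0%nat * t) by nra. assert (0 < yh 0%nat * t^2) by (apply Rmult_lt_0_compat; [lra| apply pow_lt; lra]).
  lra.
Qed.


Fixpoint UV (t a : R) (i : nat) : R * R :=
  match i with
  | O => (t, a)
  | S k => let p := UV t a k in
           (t * Rmin (fst p) (snd p), coef t (S k) * (fst p + snd p))
  end.

Definition UU t a i := fst (UV t a i).
Definition VV t a i := snd (UV t a i).

Lemma coef_pos t i : 0 < coef t i.
Proof. unfold coef, Rpower. apply exp_pos. Qed.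

Lemma UV_pos t a i : 0 < t -> 0 < a -> 0 < UU t a i /\ 0 < VV t a i.
Proof.
  intros Ht Ha. induction i as [|i [IH1 IH2]]; unfold UU, VV in *; simpl; auto.
  split.
  - apply Rmult_lt_0_compat; auto. unfold Rmin; destruct Rle_dec; auto.
  - apply Rmult_lt_0_compat; [apply coef_pos|lra].
Qed.

Definition tu t a k i := if Nat.ltb i k then UU t a i else 0.
Definition tv t a k i := if Nat.ltb i k then VV t a i else 0.
Definition tz t a k i := match i with O => t - tu t a k 0 | S m => t * tu t a k m - tu t a k (S m) end.
Definition tzp t a k i := match i with O => 0 | S m => t * tv t a k m - tu t a k (S m) end.
Definition th t a k i := match i with O => t ^ 2 - tv t a k 0 | S m => coef t (S m) * (tu t a k m + tv t a k m) - tv t a k (S m) end.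

Lemma trunc_feas r t a k : feas r t (tu t a k) (tv t a k) (tz t a k) (tzp t a k) (th t a k).
Proof.
  split; [|split].
  - simpl. ring.
  - simpl. ring.
  - intros i Hi. destruct i as [|m]; [lia|]. replace (S m - 1)%nat with m by lia.
    simpl. split; [|split]; ring.
Qed.

Lemma trunc_nonneg r t a k : 1 < t -> 0 < a -> a <= t ^ 2 ->
  (forall j, (j <= r)%nat -> 0 <= tu t a k j /\ 0 <= tv t a k j /\ 0 <= tz t a k j /\ 0 <= th t a k j) /\
  (forall j, (1 <= j <= r)%nat -> 0 <= tzp t a k j).
Proof.
  intros Ht Ha Ha2.
  assert (Hp : forall i, 0 < UU t a i /\ 0 < VV t a i) by (intros; apply UV_pos; lra).
  assert (Hu : forall i, 0 <= tu t a k i) by (intros i; unfold tu; destruct Nat.ltb; [destruct (Hp i)|]; lra).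
  assert (Hv : forall i, 0 <= tv t a k i) by (intros i; unfold tv; destruct Nat.ltb; [destruct (Hp i)|]; lra).
  assert (Hm : forall m, Nat.ltb (S m) k = true -> Nat.ltb m k = true).
  { intros m H. apply Nat.ltb_lt in H. apply Nat.ltb_lt. lia. }
  split.
  - intros j _. split; [auto|split; [auto|split]].
    + destruct j as [|m]; simpl.
      * unfold tu; destruct Nat.ltb; unfold UU; simpl; lra.
      * unfold tu. destruct (Nat.ltb (S m) k) eqn:E.
        -- rewrite (Hm m E). unfold UU at 2. simpl.
           pose proof (Rmin_l (UU t a m) (VV t a m)). unfold UU, VV in *. nra.
        -- pose proof (Hu m). unfold tu in H. nra.
    + destruct j as [|m]; simpl.
      * unfold tv; destruct Nat.ltb; unfold VV; simpl; lra.
      * destruct (Nat.ltb (S m) k) eqn:E.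
        -- assert (X : tv t a k (S m) = VV t a (S m)) by (unfold tv; rewrite E; reflexivity). rewrite X. unfold tu, tv. rewrite (Hm m E). unfold UU, VV. simpl. lra.
        -- assert (X : tv t a k (S m) = 0) by (unfold tv; rewrite E; reflexivity). rewrite X. pose proof (Hu m). pose proof (Hv m). pose proof (coef_pos t (S m)). nra.
  - intros j Hj. destruct j as [|m]; [lia|]. simpl.
    unfold tu at 1. destruct (Nat.ltb (S m) k) eqn:E.
    + unfold tv. rewrite (Hm m E). unfold UU. simpl.
      pose proof (Rmin_r (UU t a m) (VV t a m)). unfold UU, VV in *. nra.
    + pose proof (Hv m). nra.
Qed.


Lemma tu_lt t a k i : (i < k)%nat -> tu t a k i = UU t a i.
Proof. intros H. unfold tu. replace (Nat.ltb i k) with true by (symmetry; apply Nat.ltb_lt; lia). auto. Qed.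
Lemma tv_lt t a k i : (i < k)%nat -> tv t a k i = VV t a i.
Proof. intros H. unfold tv. replace (Nat.ltb i k) with true by (symmetry; apply Nat.ltb_lt; lia). auto. Qed.
Lemma tu_ge t a k i : (k <= i)%nat -> tu t a k i = 0.
Proof. intros H. unfold tu. replace (Nat.ltb i k) with false by (symmetry; apply Nat.ltb_ge; lia). auto. Qed.
Lemma tv_ge t a k i : (k <= i)%nat -> tv t a k i = 0.
Proof. intros H. unfold tv. replace (Nat.ltb i k) with false by (symmetry; apply Nat.ltb_ge; lia). auto. Qed.

Lemma bounds r t mu u v z zp h yz yzp yh su sv :
  (1 <= r)%nat -> 1 < t ->
  central_point r t mu u v z zp h yz yzp yh su sv ->
  (forall i, (i <= r)%nat ->
     UU t (v 0%nat) i <= 5 * INR (S r) * u i /\ u i <= UU t (v 0%nat) i /\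
     VV t (v 0%nat) i <= 5 * INR (S r) * v i /\ v i <= VV t (v 0%nat) i) /\
  (t <= 5 * INR (S r) * z 0%nat /\ z 0%nat <= t /\
   t ^ 2 <= 5 * INR (S r) * h 0%nat /\ h 0%nat <= t ^ 2) /\
  (forall m, (S m <= r)%nat ->
     t * UU t (v 0%nat) m <= 5 * INR (S r) * z (S m) /\ z (S m) <= t * UU t (v 0%nat) m /\
     t * VV t (v 0%nat) m <= 5 * INR (S r) * zp (S m) /\ zp (S m) <= t * VV t (v 0%nat) m /\
     VV t (v 0%nat) (S m) <= 5 * INR (S r) * h (S m) /\ h (S m) <= VV t (v 0%nat) (S m)).
Proof.
  intros Hr Ht Hc.
  pose proof Hc as [C0 [C1 [C2 [C3 [C4 C5]]]]].
  set (a := v 0%nat).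
  assert (Ha : 0 < a) by (destruct (C4 0%nat ltac:(lia)) as [_ [q _]]; exact q).
  assert (Ha2 : a <= t ^ 2) by (destruct (C4 0%nat ltac:(lia)) as [_ [_ [_ [_ [_ [_ [_ [_ [_ [q _]]]]]]]]]]; unfold a; lra).
  assert (K : forall k, (forall j, (j <= r)%nat ->
    tu t a k j <= 5 * INR (S r) * u j /\ tv t a k j <= 5 * INR (S r) * v j /\
    tz t a k j <= 5 * INR (S r) * z j /\ th t a k j <= 5 * INR (S r) * h j /\
    ((1 <= j)%nat -> tzp t a k j <= 5 * INR (S r) * zp j))).
  { intros k. destruct (trunc_nonneg r t a k Ht Ha Ha2) as [N1 N2].
    apply (key r t mu u v z zp h yz yzp yh su sv); auto.
    - apply trunc_feas.
    - unfold tv. destruct Nat.ltb; unfold VV; simpl; unfold a in *; lra. }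
  assert (Hup : forall i, (i <= r)%nat -> u i <= UU t a i /\ v i <= VV t a i).
  { induction i as [|i IH]; intros Hi.
    - unfold UU, VV; simpl. destruct (C4 0%nat ltac:(lia)) as [_ [_ [_ [_ [_ [_ [q _]]]]]]].
      unfold a. lra.
    - destruct (IH ltac:(lia)) as [I1 I2].
      destruct (C2 (S i) ltac:(lia)) as [G1 [G2 G3]].
      replace (S i - 1)%nat with i in G1, G2, G3 by lia.
      destruct (C4 (S i) ltac:(lia)) as [_ [_ [_ [_ [_ [_ [q1 [_ [_ [q2 _]]]]]]]]]].
      destruct (C5 (S i) ltac:(lia)) as [q3 _].
      pose proof (coef_pos t (S i)).
      unfold UU, VV; simpl. fold (UU t a i). fold (VV t a i).
      split.
      + unfold Rmin. destruct Rle_dec; nra.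
      + nra. }
  split; [|split].
  - intros i Hi. destruct (K (S r) i Hi) as [k1 [k2 _]].
    rewrite tu_lt in k1 by lia. rewrite tv_lt in k2 by lia.
    destruct (Hup i Hi). auto.
  - destruct (K 0%nat 0%nat ltac:(lia)) as [_ [_ [k3 [k4 _]]]].
    unfold tz, th in k3, k4. rewrite tu_ge in k3 by lia. rewrite tv_ge in k4 by lia.
    destruct (C4 0%nat ltac:(lia)) as [q0 [q1 [_ [_ [_ [_ [q2 [_ [_ [q3 _]]]]]]]]]].
    repeat split; lra.
  - intros m Hm. destruct (K (S m) (S m) Hm) as [_ [_ [k3 [k4 k5]]]].
    specialize (k5 ltac:(lia)). unfold tz, th, tzp in k3, k4, k5.
    rewrite (tu_ge t a (S m) (S m)) in k3, k5 by lia. rewrite (tv_ge t a (S m) (S m)) in k4 by lia.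
    rewrite (tu_lt t a (S m) m) in k3, k4 by lia. rewrite (tv_lt t a (S m) m) in k4, k5 by lia.
    destruct (Hup m ltac:(lia)) as [I1 I2].
    destruct (Hup (S m) Hm) as [I3 I4].
    destruct (C2 (S m) ltac:(lia)) as [G1 [G2 G3]].
    replace (S m - 1)%nat with m in G1, G2, G3 by lia.
    destruct (C4 (S m) ltac:(lia)) as [q0 [q1 _]].
    pose proof (coef_pos t (S m)).
    assert (VV t a (S m) = coef t (S m) * (UU t a m + VV t a m)) by (unfold VV, UU; reflexivity).
    split; [lra|split; [nra|split; [lra|split; [nra|split; [lra|nra]]]]].
Qed.


Lemma N_ge r : 1 <= 5 * INR (S r).
Proof. rewrite S_INR. pose proof (pos_INR r). lra. Qed.

Lemma v0_bound r t mu u v z zp h yz yzp yh su sv :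
  (1 <= r)%nat -> 1 < t ->
  central_point r t mu u v z zp h yz yzp yh su sv ->
  Rmin (t ^ 2) mu <= 2 * (5 * INR (S r)) * v 0%nat /\
  v 0%nat <= 2 * (5 * INR (S r)) * Rmin (t ^ 2) mu.
Proof.
  intros Hr Ht Hc.
  pose proof (bounds r t mu u v z zp h yz yzp yh su sv Hr Ht Hc) as [_ [[_ [_ [B1 _]]] _]].
  pose proof (v0_le r t mu u v z zp h yz yzp yh su sv Hc ltac:(lra)) as B2.
  pose proof Hc as [C0 [C1 [C2 [C3 [C4 C5]]]]].
  pose proof (N_ge r) as HN. set (N := 5 * INR (S r)) in *.
  destruct (C4 0%nat ltac:(lia)) as [a [b [c [d [e [f [g [k [l [m [o p]]]]]]]]]]].
  destruct (C5 1%nat ltac:(lia)) as [_ [w _]].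
  destruct (C4 1%nat ltac:(lia)) as [_ [_ [_ [_ [_ [_ [_ [_ [_ [_ [w2 _]]]]]]]]]]].
  destruct (C3 0%nat ltac:(lia)) as [_ E].
  replace (Nat.ltb 0 r) with true in E by (symmetry; apply Nat.ltb_lt; lia).
  simpl Nat.eqb in E.
  pose proof (coef_pos t 1).
  assert (Hsv : sv 0%nat <= 1 + yh 0%nat) by (rewrite E; nra).
  assert (Hmu : 0 < mu) by nra.
  assert (Ht2 : 0 < t ^ 2) by (apply pow_lt; lra).
  assert (X1 : mu <= v 0%nat + v 0%nat * yh 0%nat) by nra.
  assert (X2 : yh 0%nat * t ^ 2 <= N * mu) by nra.
  assert (X3 : mu * t ^ 2 <= v 0%nat * t ^ 2 + N * (v 0%nat * mu)) by nra.
  split.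
  - unfold Rmin; destruct Rle_dec.
    +
      apply (Rmult_le_reg_r mu); [lra|].
      assert (v 0%nat * t ^ 2 <= v 0%nat * mu) by (apply Rmult_le_compat_l; lra).
      assert (v 0%nat * mu <= N * (v 0%nat * mu)) by (assert (0 <= v 0%nat * mu) by nra; nra). nra.
    + apply (Rmult_le_reg_r (t ^ 2)); [lra|].
      assert (N * (v 0%nat * mu) <= N * (v 0%nat * t ^ 2)) by (apply Rmult_le_compat_l; [lra|]; apply Rmult_le_compat_l; lra).
      assert (v 0%nat * t^2 <= N * (v 0%nat * t^2)) by (assert (0 <= v 0%nat * t^2) by nra; nra). nra.
  - unfold Rmin; destruct Rle_dec; nra.
Qed.


Theorem mainTheorem13 (r : nat) (hr : (1 <= r)%nat) (lam : R)
  (u v z zp h yz yzp yh su sv : R -> nat -> R) :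
  (exists T, forall t, T < t ->
     central_point r t (Rpower t lam)
       (u t) (v t) (z t) (zp t) (h t) (yz t) (yzp t) (yh t) (su t) (sv t)) ->
  (forall i, (i <= r)%nat ->
     has_val (fun t => u t i) (u_val lam i) /\
     has_val (fun t => v t i) (v_val lam i) /\
     has_val (fun t => z t i) (z_val lam i) /\
     has_val (fun t => h t i) (h_val lam i)) /\
  (forall i, (1 <= i <= r)%nat ->
     has_val (fun t => zp t i) (zp_val lam i)).
Proof.
  intros [T HT].
  set (T0 := Rmax T 1).
  assert (HT0 : forall t, T0 < t -> 1 < t /\ central_point r t (Rpower t lam)
       (u t) (v t) (z t) (zp t) (h t) (yz t) (yzp t) (yh t) (su t) (sv t)).
  { intros t Ht. split.
    - eapply Rle_lt_trans; [apply Rmax_r|exact Ht].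
    - apply HT. eapply Rle_lt_trans; [apply Rmax_l|exact Ht]. }
  pose proof (N_ge r) as HN. set (N := 5 * INR (S r)) in *.
  assert (Hv0 : theta (fun t => v t 0%nat) (Rmin 2 lam)).
  { apply (theta_sandwich (fun t => Rmin (Rpower t 2) (Rpower t lam))).
    - apply (theta_min _ _ 2 lam); auto; apply theta_pow.
    - exists (2 * N), T0. split; [lra|]. intros t Ht.
      destruct (HT0 t Ht) as [H1 Hc].
      assert (Rpower t 2 = t ^ 2).
      { assert (INR 2 = 2) by (simpl; lra). rewrite <- H at 1. apply Rpower_pow. lra. }
      rewrite H. apply (v0_bound r t _ _ _ _ _ _ _ _ _ _ _ hr H1 Hc). }
  assert (HUV : forall i, theta (fun t => UU t (v t 0%nat) i) (u_val lam i) /\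
                          theta (fun t => VV t (v t 0%nat) i) (v_val lam i)).
  { induction i as [|i [IH1 IH2]].
    - split; [exact theta_id | exact Hv0].
    - split.
      + apply (theta_mul (fun t => t) (fun t => Rmin (UU t (v t 0%nat) i) (VV t (v t 0%nat) i))
                1 (Rmin (u_val lam i) (v_val lam i))).
        * reflexivity.
        * exact theta_id.
        * apply (theta_min _ _ (u_val lam i) (v_val lam i)); auto.
      + apply (theta_mul (fun t => coef t (S i)) (fun t => UU t (v t 0%nat) i + VV t (v t 0%nat) i)
                (1 - / 2 ^ (S i)) (Rmax (u_val lam i) (v_val lam i))).
        * reflexivity.
        * apply theta_pow.
        * apply (theta_plus _ _ (u_val lam i) (v_val lam i)); auto. }
  assert (Sw : forall (M f : R -> R) e, theta M e ->
     (forall t, T0 < t -> M t <= N * f t /\ f t <= M t) -> has_val f e).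
  { intros M f e HM Hb. apply theta_has_val. apply (theta_sandwich M); auto.
    destruct (theta_pos M e HM) as [T1 HT1].
    exists N, (Rmax T0 T1). split; auto. intros t Ht.
    destruct (Hb t) as [b1 b2]; [eapply Rle_lt_trans; [apply Rmax_l|exact Ht]|].
    assert (0 < M t) by (apply HT1; eapply Rle_lt_trans; [apply Rmax_r|exact Ht]).
    split; auto. nra. }
  split.
  - intros i Hi. destruct (HUV i) as [U1 V1].
    split; [|split; [|split]].
    + apply (Sw _ _ _ U1). intros t Ht. destruct (HT0 t Ht) as [H1 Hc].
      destruct (bounds r t _ _ _ _ _ _ _ _ _ _ _ hr H1 Hc) as [B _].
      destruct (B i Hi) as [b1 [b2 _]]. auto.
    + apply (Sw _ _ _ V1). intros t Ht. destruct (HT0 t Ht) as [H1 Hc].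
      destruct (bounds r t _ _ _ _ _ _ _ _ _ _ _ hr H1 Hc) as [B _].
      destruct (B i Hi) as [_ [_ [b1 b2]]]. auto.
    + destruct i as [|m].
      * apply (Sw _ _ _ theta_id). intros t Ht. destruct (HT0 t Ht) as [H1 Hc].
        destruct (bounds r t _ _ _ _ _ _ _ _ _ _ _ hr H1 Hc) as [_ [[b1 [b2 _]] _]]. auto.
      * destruct (HUV m) as [U2 _].
        apply (Sw (fun t => t * UU t (v t 0%nat) m)).
        { apply (theta_mul (fun t => t) (fun t => UU t (v t 0%nat) m) 1 (u_val lam m)); auto.
          exact theta_id. }
        intros t Ht. destruct (HT0 t Ht) as [H1 Hc].
        destruct (bounds r t _ _ _ _ _ _ _ _ _ _ _ hr H1 Hc) as [_ [_ B]].
        destruct (B m Hi) as [b1 [b2 _]]. auto.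
    + destruct i as [|m].
      * apply (Sw (fun t => Rpower t 2) _ _ (theta_pow 2)). intros t Ht. destruct (HT0 t Ht) as [H1 Hc].
        destruct (bounds r t _ _ _ _ _ _ _ _ _ _ _ hr H1 Hc) as [_ [[_ [_ [b1 b2]]] _]].
        assert (Rpower t 2 = t ^ 2).
        { assert (INR 2 = 2) by (simpl; lra). rewrite <- H at 1. apply Rpower_pow. lra. }
        rewrite H. auto.
      * apply (Sw _ _ _ V1). intros t Ht. destruct (HT0 t Ht) as [H1 Hc].
        destruct (bounds r t _ _ _ _ _ _ _ _ _ _ _ hr H1 Hc) as [_ [_ B]].
        destruct (B m Hi) as [_ [_ [_ [_ [b1 b2]]]]]. auto.
  - intros i Hi. destruct i as [|m]; [lia|].
    destruct (HUV m) as [_ V2].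
    apply (Sw (fun t => t * VV t (v t 0%nat) m)).
    { apply (theta_mul (fun t => t) (fun t => VV t (v t 0%nat) m) 1 (v_val lam m)); auto.
      - unfold zp_val. replace (S m - 1)%nat with m by lia. reflexivity.
      - exact theta_id. }
    intros t Ht. destruct (HT0 t Ht) as [H1 Hc].
    destruct (bounds r t _ _ _ _ _ _ _ _ _ _ _ hr H1 Hc) as [_ [_ B]].
    destruct (B m ltac:(lia)) as [_ [_ [b1 [b2 _]]]]. auto.
Qed.
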